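(* Let $(R,\mathfrak{m})$ be a commutative Artinian local ring with identity, $\mathfrak{m}\neq0$ and $\mathfrak{m}^2=0$. In $R[x]$: $L(x)=\{1\}$, $L(x^2)=\{2\}$, $L(x^3)=\{3\}$, $L(x^4)=\{2,4\}$, and $L(x^5)=\{3,5\}$.
   Context: A nonunit polynomial in $R[x]$ is irreducible if in any factorization into two polynomials one factor is a unit of $R[x]$. A positive integer $k$ is a length of $f$ if $f$ is a product of $k$ irreducible polynomials of $R[x]$; $L(f)$ denotes the set of lengths of $f$. *)

(* Defs.v *)
From HB Require Import structures.
From mathcomp Require Import all_boot all_order all_algebra.
Set Implicit Arguments. Unset Strict Implicit. Unset Printing Implicit Defensive.
Import GRing.Theory.
Local Open Scope ring_scope.

Definition is_ideal (R : comNzRingType) (I : R -> Prop) : Prop :=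
  I 0 /\ (forall a b, I a -> I b -> I (a + b)) /\ (forall r a, I a -> I (r * a)).

Definition unique_maximal_ideal (R : comNzRingType) (m : R -> Prop) : Prop :=
  is_ideal m /\ ~ m 1 /\
  (forall I : R -> Prop, is_ideal I -> ~ I 1 -> forall x, I x -> m x).

Definition artinian (R : comNzRingType) : Prop :=
  forall I : nat -> R -> Prop,
    (forall n, is_ideal (I n)) ->
    (forall n x, I n.+1 x -> I n x) ->
    exists N, forall n, (N <= n)%N -> forall x, I n x <-> I N x.

Definition poly_unit (R : comNzRingType) (f : {poly R}) : Prop :=
  exists g : {poly R}, f * g = 1.

Definition poly_irreducible (R : comNzRingType) (f : {poly R}) : Prop :=
  ~ poly_unit f /\
  (forall g h : {poly R}, f = g * h -> poly_unit g \/ poly_unit h).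

Definition is_length (R : comNzRingType) (f : {poly R}) (k : nat) : Prop :=
  (0 < k)%N /\
  exists s : seq {poly R},
    size s = k /\ (forall g, g \in s -> poly_irreducible g) /\
    \prod_(g <- s) g = f.

(* Main.v *)
From Pilot Require Import Defs.
From HB Require Import structures.
From mathcomp Require Import all_boot all_order all_algebra.
Import GRing.Theory.
From Stdlib Require Import Classical.
From mathcomp Require Import zify ring.
Import Pilot.Defs.
Set Implicit Arguments. Unset Strict Implicit.

Fixpoint disj (k : nat) (P : nat -> Prop) : Prop :=
  match k with 0 => False | k'.+1 => disj k' P \/ P k' end.

Lemma to_disj k (P : nat -> Prop) : (exists i, (i < k)%N /\ P i) -> disj k P.
Proof.
elim: k => [[i [hi _]]//|k IH [i [hi pi]]] /=.
case: (ltnP i k) => h; first by left; apply: IH; exists i.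
by right; have <- : i = k by lia.
Qed.

Lemma sum_ge (f : nat -> nat) k : (forall i, (i < k)%N -> (1 <= f i)%N) -> (k <= \sum_(i < k) f i)%N.
Proof.
move=> h; apply: (@leq_trans (\sum_(i < k) 1)%N).
  by rewrite sum_nat_const card_ord muln1.
by apply: leq_sum => i _; apply: h.
Qed.

Ltac kj key j := let K := fresh "K" in
  have K := fun h => to_disj (key j%N isT h); simpl in K.
Ltac pj pos j := let K := fresh "P" in have K := pos j%N isT.

Lemma comb k (f : nat -> nat) n : (n <= 5)%N -> (0 < k)%N -> (\sum_(i < k) f i)%N = n ->
  (forall i, (i < k)%N -> (1 <= f i)%N) ->
  (forall j, (j < k)%N -> (2 <= f j)%N -> exists i, (i < k)%N /\ i <> j /\ (f j <= f i)%N) ->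
  ((n <= 3)%N -> k = n) /\ (n = 4 -> k = 2 \/ k = 4) /\ (n = 5 -> k = 3 \/ k = 5).
Proof.
move=> n5 k0 hs pos key.
have kn : (k <= n)%N by rewrite -hs; apply: sum_ge.
have k5 : (k <= 5)%N by lia.
case: k k0 hs pos key kn k5 => [|[|[|[|[|[|k]]]]]] //= k0 hs pos key kn k5;
  rewrite ?big_ord_recr big_ord0 /= in hs.
- pj pos 0; kj key 0; lia.
- pj pos 0; pj pos 1; kj key 0; kj key 1; lia.
- pj pos 0; pj pos 1; pj pos 2; kj key 0; kj key 1; kj key 2; lia.
- pj pos 0; pj pos 1; pj pos 2; pj pos 3; kj key 0; kj key 1; kj key 2; kj key 3; lia.
- pj pos 0; pj pos 1; pj pos 2; pj pos 3; pj pos 4;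
  kj key 0; kj key 1; kj key 2; kj key 3; kj key 4; lia.
Qed.

Local Open Scope ring_scope.

Definition sqz (R : comNzRingType) (m : R -> Prop) :=
  unique_maximal_ideal m /\ (forall a b, m a -> m b -> a * b = 0).

Lemma m0 (R : comNzRingType) (m : R -> Prop) : sqz m -> m 0.
Proof. by case=> [[[]]]. Qed.
Lemma mD (R : comNzRingType) (m : R -> Prop) : sqz m -> forall a b, m a -> m b -> m (a + b).
Proof. by case=> [[[_ []]]]. Qed.
Lemma mMl (R : comNzRingType) (m : R -> Prop) : sqz m -> forall r a, m a -> m (r * a).
Proof. by case=> [[[_ []]]]. Qed.
Lemma mMr (R : comNzRingType) (m : R -> Prop) : sqz m -> forall r a, m a -> m (a * r).
Proof. by move=> H r a ma; rewrite mulrC; apply: mMl. Qed.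
Lemma mN (R : comNzRingType) (m : R -> Prop) : sqz m -> forall a, m a -> m (- a).
Proof. by move=> H a ma; rewrite -mulN1r; apply: mMl. Qed.
Lemma mm0 (R : comNzRingType) (m : R -> Prop) : sqz m -> forall a b, m a -> m b -> a * b = 0.
Proof. by case. Qed.
Lemma nm1 (R : comNzRingType) (m : R -> Prop) : sqz m -> ~ m 1.
Proof. by case=> [[_ []]]. Qed.

Lemma unit_nm (R : comNzRingType) (m : R -> Prop) : sqz m -> forall a, ~ m a -> exists b, b * a = 1.
Proof.
move=> H a na.
pose I := fun x : R => exists r, x = r * a.
have II : is_ideal I.
  split; first by exists 0; rewrite mul0r.
  split; first by move=> x y [r ->] [s ->]; exists (r + s); rewrite mulrDl.
  by move=> r x [s ->]; exists (r * s); rewrite mulrA.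
case: (classic (I 1)) => [[r hr]|nI]; first by exists r.
case: H => [[_ [_ Hmax]] _]; exfalso; apply: na; apply: (Hmax I II nI).
by exists 1; rewrite mul1r.
Qed.

Lemma nmM (R : comNzRingType) (m : R -> Prop) : sqz m -> forall a b, ~ m a -> ~ m b -> ~ m (a * b).
Proof.
move=> H a b na nb mab; have [b' hb] := unit_nm H nb; apply: na.
have -> : a = a * b * b' by rewrite -mulrA (mulrC b) hb mulr1.
exact: mMr.
Qed.

Lemma nmD (R : comNzRingType) (m : R -> Prop) : sqz m -> forall a b, ~ m a -> m b -> ~ m (a + b).
Proof.
move=> H a b na mb mab; apply: na.
have -> : a = (a + b) + - b by rewrite addrK.
by apply: mD => //; apply: mN.
Qed.

Lemma msum (R : comNzRingType) (m : R -> Prop) : sqz m -> forall (I : Type) (r : seq I) (P : pred I) (F : I -> R),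
  (forall i, P i -> m (F i)) -> m (\sum_(i <- r | P i) F i).
Proof.
move=> H I r P F hF; apply: big_ind => //; first exact: m0.
exact: mD.
Qed.


Definition shp (R : comNzRingType) (m : R -> Prop) (p : {poly R}) (a : nat) :=
  ~ m p`_a /\ forall i, i != a -> m p`_i.

Lemma coef_nm (R : comNzRingType) (m : R -> Prop) : sqz m -> forall (g h : {poly R}) a b,
  ~ m g`_a -> ~ m h`_b ->
  (forall j, (j <= a + b)%N -> j != a -> m g`_j \/ m h`_(a + b - j)) -> ~ m (g * h)`_(a + b).
Proof.
move=> H g h a b ga hb hj.
have lt : (a < (a + b).+1)%N by lia.
rewrite coefM (bigD1 (Ordinal lt)) //=.
apply: (nmD H); first by rewrite addKn; apply: nmM.
apply: (msum H) => j /= hneq.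
have jn : (nat_of_ord j != a).
  by apply/eqP => e; move/eqP: hneq; apply; apply: val_inj.
have jle : (j <= a + b)%N by have := ltn_ord j; lia.
case: (hj _ jle jn) => hm; [exact: mMr | exact: mMl].
Qed.

Lemma coef_m (R : comNzRingType) (m : R -> Prop) : sqz m -> forall (g h : {poly R}) d,
  (forall j, (j <= d)%N -> m g`_j \/ m h`_(d - j)) -> m (g * h)`_d.
Proof.
move=> H g h d hj; rewrite coefM; apply: (msum H) => j _.
have jle : (j <= d)%N by have := ltn_ord j; lia.
case: (hj _ jle) => hm; [exact: mMr | exact: mMl].
Qed.

Lemma shape_mul (R : comNzRingType) (m : R -> Prop) : sqz m -> forall (g h : {poly R}) a b,
  shp m g a -> shp m h b -> shp m (g * h) (a + b).
Proof.
move=> H g h a b [ga gi] [hb hi]; split.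
  by apply: coef_nm => // j _ ja; left; apply: gi.
move=> i ni; apply: coef_m => // j jle.
case: (eqVneq j a) => [ja|ja]; last by left; apply: gi.
right; apply: hi; subst j; apply/eqP => e; move/eqP: ni; apply; lia.
Qed.

Lemma shape_uniq (R : comNzRingType) (m : R -> Prop) (p : {poly R}) a b :
  shp m p a -> shp m p b -> a = b.
Proof.
move=> [pa _] [_ pb]; case: (eqVneq a b) => // nab.
by exfalso; apply: pa; apply: pb.
Qed.

Lemma shape_Xn (R : comNzRingType) (m : R -> Prop) : sqz m -> forall n, shp m ('X^n : {poly R}) n.
Proof.
move=> H n; split; first by rewrite coefXn eqxx; apply: nm1.
by move=> i /negPf ni; rewrite coefXn ni; apply: m0.
Qed.

Lemma ex_least (P : nat -> Prop) i : P i -> exists j, P j /\ forall l, (l < j)%N -> ~ P l.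
Proof.
have : forall n i, (i <= n)%N -> P i -> exists j, P j /\ forall l, (l < j)%N -> ~ P l.
  elim=> [|n IH] k hk pk.
    by exists k; split => // l; lia.
  case: (classic (exists l, (l < k)%N /\ P l)) => [[l [hl pl]]|no].
    by apply: (IH l) => //; lia.
  by exists k; split => // l hl pl; apply: no; exists l.
by move=> /(_ i i (leqnn i)).
Qed.

Lemma ex_greatest (P : nat -> Prop) i N : P i -> (forall l, (N <= l)%N -> ~ P l) ->
  exists j, P j /\ forall l, (j < l)%N -> ~ P l.
Proof.
have : forall k i, P i -> (forall l, (i + k < l)%N -> ~ P l) ->
    exists j, P j /\ forall l, (j < l)%N -> ~ P l.
  elim=> [|k IH] j pj hb.
    by exists j; split => // l hl; apply: hb; lia.
  case: (classic (exists l, (j < l)%N /\ P l)) => [[l [hl pl]]|no].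
    by apply: (IH l) => // l' hl'; apply: hb; lia.
  by exists j; split => // l hl pl; apply: no; exists l.
move=> G pi hN; apply: (G N i pi) => l hl; apply: hN; lia.
Qed.

Lemma exists_nm (R : comNzRingType) (m : R -> Prop) : sqz m -> forall (g h p : {poly R}) n,
  g * h = p -> shp m p n -> exists i, ~ m g`_i.
Proof.
move=> H g h p n e [pn _]; apply: NNPP => no; apply: pn; rewrite -e.
apply: coef_m => // j _; left; apply: NNPP => nj; apply: no; by exists j.
Qed.

Lemma shape_factor (R : comNzRingType) (m : R -> Prop) : sqz m -> forall (g h p : {poly R}) n,
  g * h = p -> shp m p n -> exists a b, shp m g a /\ shp m h b.
Proof.
move=> H g h p n e sp.
have [i gi] := exists_nm H e sp.
have [k hk] := exists_nm H (etrans (mulrC h g) e) sp.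
have [a [ga amin]] := @ex_least (fun j => ~ m g`_j) _ gi.
have [b [hb bmin]] := @ex_least (fun j => ~ m h`_j) _ hk.
have hbig : forall (q : {poly R}) l, (size q <= l)%N -> ~ ~ m q`_l.
  by move=> q l hl nl; apply: nl; rewrite nth_default //; apply: m0.
have [a' [ga' amax]] := @ex_greatest (fun j => ~ m g`_j) _ _ gi (hbig g).
have [b' [hb' bmax]] := @ex_greatest (fun j => ~ m h`_j) _ _ hk (hbig h).
have Hab : (a + b)%N = n.
  apply: NNPP => ne; apply: (@coef_nm _ _ H g h a b ga hb).
    move=> j jle ja; case: (ltnP j a) => hja.
      by left; apply: NNPP; apply: amin.
    by right; apply: NNPP; apply: bmin; lia.
  rewrite e; apply: sp.2; apply/eqP; exact: ne.
have Hab' : (a' + b')%N = n.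
  apply: NNPP => ne; apply: (@coef_nm _ _ H g h a' b' ga' hb').
    move=> j jle ja; case: (ltnP a' j) => hja.
      by left; apply: NNPP; apply: amax.
    by right; apply: NNPP; apply: bmax; lia.
  rewrite e; apply: sp.2; apply/eqP; exact: ne.
have aa : (a <= a')%N by case: (leqP a a') => // h1; exfalso; exact: (amax a h1 ga).
have bb : (b <= b')%N by case: (leqP b b') => // h1; exfalso; exact: (bmax b h1 hb).
have ea : a' = a by lia.
have eb : b' = b by lia.
subst a' b'.
exists a, b; split; split => // j nj; apply: NNPP.
  by case: (ltnP j a) => hj; [apply: amin | apply: amax; move/eqP: nj; lia].
by case: (ltnP j b) => hj; [apply: bmin | apply: bmax; move/eqP: nj; lia].
Qed.


Lemma poly_mm0 (R : comNzRingType) (m : R -> Prop) : sqz m -> forall (p q : {poly R}),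
  (forall i, m p`_i) -> (forall i, m q`_i) -> p * q = 0.
Proof.
move=> H p q hp hq; apply/polyP => i; rewrite coefM coef0; apply: big1 => j _.
exact: (mm0 H).
Qed.

Lemma shape0_unit (R : comNzRingType) (m : R -> Prop) : sqz m -> forall (g : {poly R}),
  shp m g 0 -> poly_unit g.
Proof.
move=> H g [g0 gi].
have [c' hc] := unit_nm H g0.
set c := g`_0 in hc g0 *.
set e := g - c%:P.
have me : forall i, m e`_i.
  move=> i; rewrite /e coefB coefC; case: eqP => [->|/eqP ni].
    by rewrite subrr; apply: m0.
  by rewrite subr0; apply: gi.
have ee : e * e = 0 by apply: (poly_mm0 H).
have ge : g = c%:P + e by rewrite /e addrC subrK.
have CC : c%:P * c'%:P = 1 by rewrite -polyCM mulrC hc.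
exists (c'%:P - c'%:P * c'%:P * e); rewrite ge.
have -> : (c%:P + e) * (c'%:P - c'%:P * c'%:P * e) =
   c%:P * c'%:P + c'%:P * e * (1 - c%:P * c'%:P) - c'%:P * c'%:P * (e * e) by ring.
by rewrite CC ee subrr !mulr0 subr0 addr0.
Qed.

Lemma shape_nunit (R : comNzRingType) (m : R -> Prop) : sqz m -> forall (g : {poly R}) a,
  shp m g a -> (0 < a)%N -> ~ poly_unit g.
Proof.
move=> H g a sg a0 [h e].
have s1 : shp m (1 : {poly R}) 0 by rewrite -(expr0 ('X : {poly R})); apply: shape_Xn.
have [a' [b [sa sb]]] := shape_factor H e s1.
have := shape_mul H sa sb; rewrite e => s2.
have := shape_uniq s1 s2; have := shape_uniq sg sa; lia.
Qed.

Lemma irr_shape (R : comNzRingType) (m : R -> Prop) : sqz m -> forall (g h p : {poly R}) n,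
  poly_irreducible g -> g * h = p -> shp m p n ->
  exists a, shp m g a /\ (1 <= a)%N /\ ((2 <= a)%N -> g`_0 != 0).
Proof.
move=> H g h p n [nu irr] e sp.
have [a [b [sa sb]]] := shape_factor H e sp.
exists a; split => //.
have a1 : (1 <= a)%N.
  by case: a sa {sb} => // sa; exfalso; apply: nu; apply: (shape0_unit H).
split => // a2; apply/eqP => g0.
have : root g 0 by rewrite /root horner_coef0 g0.
case/factor_theorem => q; rewrite subr0 => gq.
have sq : shp m q a.-1.
  case: sa => [ga gi]; split.
    by move: ga; rewrite gq coefMX; case: a a1 {a2 gi gq} => // a' _ /=.
  move=> i ni; have := gi i.+1; rewrite gq coefMX /=; apply.
  by apply/eqP => ei; move/eqP: ni; apply; rewrite -ei.
have [|] := irr q 'X gq.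
  by apply: (shape_nunit H sq); lia.
apply: (shape_nunit H (a := 1%N)) => //.
by rewrite -(expr1 ('X : {poly R})); apply: shape_Xn.
Qed.

Lemma irr_X (R : comNzRingType) (m : R -> Prop) : sqz m -> poly_irreducible ('X : {poly R}).
Proof.
move=> H.
have sX : shp m ('X : {poly R}) 1 by rewrite -(expr1 ('X : {poly R})); apply: shape_Xn.
split; first by apply: (shape_nunit H sX).
move=> g h e.
have [a [b [sa sb]]] := shape_factor H (esym e) sX.
have := shape_mul H sa sb; rewrite -e => s2; have := shape_uniq sX s2; clear s2.
case: a sa => [sa _|a sa]; first by left; apply: (shape0_unit H).
case: b sb => [sb _|b sb]; first by right; apply: (shape0_unit H).
lia.
Qed.

Lemma irr_X2c (R : comNzRingType) (m : R -> Prop) : sqz m -> forall c : R, m c -> c != 0 ->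
  poly_irreducible ('X^2 + c%:P : {poly R}).
Proof.
move=> H c mc c0.
have sX : shp m ('X^2 + c%:P : {poly R}) 2.
  split.
    rewrite coefD coefXn coefC /= addr0; exact: nm1 H.
  move=> i ni; rewrite coefD coefXn coefC (negPf ni) add0r.
  by case: (i == 0)%N => //; apply: m0.
split; first by apply: (shape_nunit H sX).
move=> g h e.
have [a [b [sa sb]]] := shape_factor H (esym e) sX.
have := shape_mul H sa sb; rewrite -e => s2; have := shape_uniq sX s2; clear s2.
case: a sa => [sa _|a sa]; first by left; apply: (shape0_unit H).
case: b sb => [sb _|b sb]; first by right; apply: (shape0_unit H).
case: a sa => [|[|a]] sa; case: b sb => [|[|b]] sb //= _.
exfalso; move/eqP: c0; apply.
have := congr1 (fun p : {poly R} => p`_0) e.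
rewrite coefD coefXn coefC /= add0r => ->.
rewrite coefM big_ord1 subnn; apply: (mm0 H); [apply: sa.2 | apply: sb.2] => //.
Qed.


Definition good (R : comNzRingType) (m : R -> Prop) (K : nat) (p : {poly R}) (B : nat) :=
  shp m p B /\ forall d, (d + K < B)%N -> p`_d = 0.

Lemma good_mul (R : comNzRingType) (m : R -> Prop) : sqz m -> forall K (p q : {poly R}) B C,
  good m K p B -> good m K q C -> good m K (p * q) (B + C).
Proof.
move=> H K p q B C [sp zp] [sq zq]; split; first exact: shape_mul.
move=> d hd; rewrite coefM; apply: big1 => /= i _.
have hi : (i <= d)%N by have := ltn_ord i; lia.
case: (ltnP (i + K) B) => h1; first by rewrite zp // mul0r.
case: (ltnP (d - i + K) C) => h2; first by rewrite zq // mulr0.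
apply: (mm0 H); [apply: sp.2 | apply: sq.2]; apply/eqP => e; lia.
Qed.

Lemma nat_choice (P : nat -> nat -> Prop) k :
  (forall i, (i < k)%N -> exists a, P i a) -> exists f : nat -> nat, forall i, (i < k)%N -> P i (f i).
Proof.
elim: k => [|k IH] h; first by exists (fun _ => 0%N).
have [f hf] : exists f : nat -> nat, forall i, (i < k)%N -> P i (f i).
  by apply: IH => i hi; apply: h; lia.
have [a ha] := h k (ltnSn k).
exists (fun i => if i == k then a else f i) => i hi.
case: eqP => [->//|/eqP ne]; apply: hf; lia.
Qed.

Lemma length_constraint (R : comNzRingType) (m : R -> Prop) : sqz m -> forall n k,
  is_length ('X^n : {poly R}) k ->
  exists f : nat -> nat, (0 < k)%N /\ (\sum_(i < k) f i)%N = n /\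
    (forall i, (i < k)%N -> (1 <= f i)%N) /\
    (forall j, (j < k)%N -> (2 <= f j)%N -> exists i, (i < k)%N /\ i <> j /\ (f j <= f i)%N).
Proof.
move=> H n k [k0 [s [sk [sirr sp]]]]; subst k.
rewrite (big_nth 0) big_mkord in sp.
set k := size s in k0 sp *.
have fac : forall j : 'I_k, s`_j * \prod_(i < k | i != j) s`_i = 'X^n.
  by move=> j; rewrite -sp [RHS](bigD1 j).
have [f hf] : exists f : nat -> nat, forall i, (i < k)%N ->
    shp m s`_i (f i) /\ (1 <= f i)%N /\ ((2 <= f i)%N -> s`_i`_0 != 0).
  apply: (@nat_choice (fun i a => shp m s`_i a /\ (1 <= a)%N /\ ((2 <= a)%N -> s`_i`_0 != 0))) => i hi.
  apply: (irr_shape H (h := \prod_(l < k | l != Ordinal hi) s`_l)).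
  - by apply: sirr; apply: mem_nth.
  - exact: (fac (Ordinal hi)).
  - exact: shape_Xn.
have Hsum : (\sum_(i < k) f i)%N = n.
  have : shp m (\prod_(i < k) s`_i) (\sum_(i < k) f i).
    apply: (big_ind2 (fun p b => shp m p b)).
    - by rewrite -(expr0 ('X : {poly R})); apply: shape_Xn.
    - by move=> ? ? ? ?; apply: shape_mul.
    - by move=> i _; apply: (hf i (ltn_ord i)).1.
  rewrite sp => s1; apply/esym; apply: shape_uniq s1; exact: shape_Xn.
exists f; split => //; split => //.
split; first by move=> i hi; case: (hf i hi) => _ [].
move=> j hj f2; apply: NNPP => no.
have lt : forall i, (i < k)%N -> i <> j -> (f i < f j)%N.
  move=> i hi ij; case: (ltnP (f i) (f j)) => // hle; exfalso; apply: no.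
  by exists i.
set jo := Ordinal hj.
set Q := \prod_(i < k | i != jo) s`_i.
set B := (\sum_(i < k | i != jo) f i)%N.
have gQ : good m (f j).-1 Q B.
  apply: (big_ind2 (fun p b => good m (f j).-1 p b)).
  - split; first by rewrite -(expr0 ('X : {poly R})); apply: shape_Xn.
    by move=> d; lia.
  - by move=> ? ? ? ?; apply: good_mul.
  - move=> i ni; have nij : nat_of_ord i <> j.
      by move=> e; move/eqP: ni; apply; apply: val_inj.
    have := lt i (ltn_ord i) nij => hlt.
    split; first exact: (hf i (ltn_ord i)).1.
    move=> d; lia.
have nB : n = (f j + B)%N by rewrite -Hsum (bigD1 jo).
have e := fac jo; rewrite -/Q in e.
have [[sj sji] [_ cj]] := hf j hj.
have c0 := cj f2.
have hc : (s`_j * Q)`_B = s`_j`_0 * Q`_B.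
  have lt0 : (0 < B.+1)%N by [].
  rewrite coefM (bigD1 (Ordinal lt0)) //= subn0 big1 ?addr0 // => l nl.
  have l0 : nat_of_ord l <> 0%N by move=> e0; move/eqP: nl; apply; apply: val_inj.
  have lB : (l <= B)%N by have := ltn_ord l; lia.
  case: (eqVneq (nat_of_ord l) (f j)) => [lf|lf].
    by rewrite gQ.2 ?mulr0 //; lia.
  apply: (mm0 H); first exact: sji.
  by apply: gQ.1.2; apply/eqP; lia.
move: hc; rewrite e coefXn.
have -> : (B == n) = false by apply/eqP; lia.
move=> /esym hc.
have [u hu] := unit_nm H gQ.1.1.
move/eqP: c0; apply.
by rewrite -[s`_j`_0]mulr1 -hu (mulrC u) mulrA hc mul0r.
Qed.


Lemma len_Xn (R : comNzRingType) (m : R -> Prop) : sqz m -> forall n, (0 < n)%N ->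
  is_length ('X^n : {poly R}) n.
Proof.
move=> H n n0; split => //; exists (nseq n 'X); split; first by rewrite size_nseq.
split; first by move=> g; rewrite mem_nseq => /andP [_ /eqP ->]; apply: (irr_X H).
elim: n {n0} => [|n IH]; first by rewrite big_nil expr0.
by rewrite /= big_cons IH exprS.
Qed.

Lemma X4 (R : comNzRingType) (a : R) : a * a = 0 ->
  ('X^2 + a%:P) * ('X^2 + (- a)%:P) = ('X^4 : {poly R}).
Proof.
move=> aa.
have AA : a%:P * a%:P = 0 :> {poly R} by rewrite -polyCM aa.
rewrite polyCN.
have -> : ('X^2 + a%:P) * ('X^2 - a%:P) = ('X^4 : {poly R}) - a%:P * a%:P by ring.
by rewrite AA subr0.
Qed.

Lemma len_X4_2 (R : comNzRingType) (m : R -> Prop) : sqz m -> forall a, m a -> a != 0 ->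
  is_length ('X^4 : {poly R}) 2.
Proof.
move=> H a ma a0; split => //; exists [:: 'X^2 + a%:P; 'X^2 + (- a)%:P]; split => //.
split; last by rewrite big_cons big_cons big_nil mulr1 X4 //; apply: (mm0 H).
move=> g; rewrite !inE => /orP [] /eqP ->; apply: (irr_X2c H) => //.
  exact: mN.
by rewrite oppr_eq0.
Qed.

Lemma len_X5_3 (R : comNzRingType) (m : R -> Prop) : sqz m -> forall a, m a -> a != 0 ->
  is_length ('X^5 : {poly R}) 3.
Proof.
move=> H a ma a0; split => //; exists [:: 'X; 'X^2 + a%:P; 'X^2 + (- a)%:P]; split => //.
split; last first.
  rewrite big_cons big_cons big_cons big_nil mulr1 X4; last by apply: (mm0 H).
  by rewrite -exprS.
move=> g; rewrite !inE => /orP [/eqP ->|/orP [] /eqP ->]; first exact: irr_X H.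
  by apply: (irr_X2c H).
apply: (irr_X2c H); [exact: mN | by rewrite oppr_eq0].
Qed.

Theorem proposition4p6 (R : comNzRingType) (m : R -> Prop) :
  unique_maximal_ideal m ->
  artinian R ->
  (exists a, m a /\ a <> 0) ->
  (forall a b, m a -> m b -> a * b = 0) ->
  (forall k, is_length ('X : {poly R}) k <-> k = 1%N) /\
  (forall k, is_length ('X^2 : {poly R}) k <-> k = 2%N) /\
  (forall k, is_length ('X^3 : {poly R}) k <-> k = 3%N) /\
  (forall k, is_length ('X^4 : {poly R}) k <-> k = 2%N \/ k = 4%N) /\
  (forall k, is_length ('X^5 : {poly R}) k <-> k = 3%N \/ k = 5%N).
Proof.
move=> Hu _ [a [ma a0]] Hm.
have H : sqz m by split.
have a0' : a != 0 by apply/eqP.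
have C : forall n k, (n <= 5)%N -> is_length ('X^n : {poly R}) k ->
    ((n <= 3)%N -> k = n) /\ (n = 4 -> k = 2 \/ k = 4) /\ (n = 5 -> k = 3 \/ k = 5).
  move=> n k n5 hl.
  have [f [k0 [hs [pos key]]]] := length_constraint H hl.
  exact: (comb n5 k0 hs pos key).
split.
  move=> k; split; first by move=> hl; apply: (C 1%N k isT _).1 => //; rewrite expr1.
  by move=> ->; have := @len_Xn _ _ H 1%N isT; rewrite expr1.
split.
  by move=> k; split; [move=> hl; apply: (C 2%N k isT hl).1 | move=> ->; apply: (len_Xn H)].
split.
  by move=> k; split; [move=> hl; apply: (C 3%N k isT hl).1 | move=> ->; apply: (len_Xn H)].
split.
  move=> k; split; first by move=> hl; apply: (C 4%N k isT hl).2.1.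
  by case=> ->; [apply: (len_X4_2 H ma) | apply: (len_Xn H)].
move=> k; split; first by move=> hl; apply: (C 5%N k isT hl).2.2.
by case=> ->; [apply: (len_X5_3 H ma) | apply: (len_Xn H)].
Qed.
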